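(* Let $(G,\mathcal{P})$ and $(H,\mathcal{Q})$ be group pairs with finite generating sets $S$ of $G$ and $T$ of $H$. If $(G,\mathcal{P})$ is a quasi-retract of $(H,\mathcal{Q})$ and $\hat\Gamma(H,\mathcal{Q},T)$ is coarsely unicone simply-connected, then $\hat\Gamma(G,\mathcal{P},S)$ is coarsely unicone simply-connected.
   Context: A group pair $(G,\mathcal{P})$: $G$ finitely generated, $\mathcal{P}$ a non-empty finite collection of subgroups (repetitions allowed); $G/\mathcal{P}=\coprod_{P\in\mathcal{P}}G/P$, elements viewed as cosets (subsets of $G$). The coned-off Cayley graph $\hat\Gamma(G,\mathcal{P},S)$ has vertex set $G\sqcup G/\mathcal{P}$, edges $\{g,g'\}$ for $g^{-1}g'\in S$ and $\{g,A\}$ for $g\in A\in G/\mathcal{P}$; vertices in $G/\mathcal{P}$ are cone vertices. An edge loop of length $l$ is a vertex sequence $v_1,\dots,v_l$ with $\{v_i,v_{i+1}\}$ and $\{v_l,v_1\}$ edges; it is unicone if it has at most one cone vertex. $\hat\Gamma_l$ is the 2-complex obtained by attaching a 2-cell along each unicone loop of length $<l$; the graph is coarsely unicone simply-connected if some $\hat\Gamma_l$ is simply-connected. With word metrics, $f$ is $(L,C)$-Lipschitz if $d(f(x),f(x'))\le L\,d(x,x')+C$. For $L\ge1,C\ge0,M\ge0$, an $(L,C,M)$-Lipschitz map of pairs $f=(f_1,f_2)$ is an $(L,C)$-Lipschitz $f_1\colon G\to H$ and $f_2\colon G/\mathcal{P}\to H/\mathcal{Q}$ with Hausdorff distance between $f_1(A)$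 and $f_2(A)$ less than $M$ for all $A$. An $(L,C,M)$-quasi-retraction of pairs $(f,r)$ consists of such $f\colon(G,\mathcal{P})\to(H,\mathcal{Q})$, $r\colon(H,\mathcal{Q})\to(G,\mathcal{P})$ with $d_G(r_1f_1(g),g)\le C$ for all $g$ and $r_2\circ f_2=\mathrm{id}$; $(G,\mathcal{P})$ is a quasi-retract of $(H,\mathcal{Q})$ if such $(f,r)$ exists for some constants. *)

(* Defs.v *)
From Stdlib Require Import Reals List Relations ClassicalEpsilon FinFun.
Import ListNotations.
Open Scope R_scope.

Set Implicit Arguments.
Unset Strict Implicit.

Record group := Group {
  gcar :> Type;
  gmul : gcar -> gcar -> gcar;
  gone : gcar;
  ginv : gcar -> gcar;
  gassoc : forall x y z, gmul x (gmul y z) = gmul (gmul x y) z;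
  gone_l : forall x, gmul gone x = x;
  ginv_l : forall x, gmul (ginv x) x = gone
}.
Arguments gmul {g}. Arguments gone {g}. Arguments ginv {g}.

Record subgroup (G : group) := Subgroup {
  sg :> G -> Prop;
  sg_one : sg gone;
  sg_mul : forall x y, sg x -> sg y -> sg (gmul x y);
  sg_inv : forall x, sg x -> sg (ginv x)
}.

Definition wprod (G : group) (w : list G) : G := fold_right gmul gone w.

Definition letter (G : group) (S : list G) (s : G) : Prop :=
  In s S \/ In (ginv s) S.

Definition generates (G : group) (S : list G) : Prop :=
  forall g : G, exists w, Forall (letter S) w /\ wprod w = g.

Definition wordlen (G : group) (S : list G) (n : nat) (x y : G) : Prop :=
  exists w, length w = n /\ Forall (letter S) w /\ wprod w = gmul (ginv x) y.

(** word metric d_S(x,y): the least such n (well defined when S generates G) *)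
Definition wdist (G : group) (S : list G) (x y : G) : nat :=
  epsilon (inhabits 0%nat)
    (fun n => wordlen S n x y /\ forall m, wordlen S m x y -> (n <= m)%nat).

(** * Cosets: G/P = disjoint union over indices i of G/P_i; a coset is
      tagged by its index and viewed as a subset of G. *)
Definition coset (G : group) (I : Type) (P : I -> subgroup G) :=
  { c : I * (G -> Prop) |
    exists g : G, forall x, snd c x <-> P (fst c) (gmul (ginv g) x) }.

Definition cmem (G : group) (I : Type) (P : I -> subgroup G)
  (A : coset P) (g : G) : Prop := snd (proj1_sig A) g.

Definition lipschitz (G H : group) (S : list G) (T : list H)
  (L C : R) (f : G -> H) : Prop :=
  forall x x', INR (wdist T (f x) (f x')) <= L * INR (wdist S x x') + C.

(** Hausdorff distance (w.r.t. d_T) between X and Y is less than M.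
    Since word distances are natural numbers, sup/inf are attained,
    so this is the literal unfolding. *)
Definition hausdorff_lt (H : group) (T : list H) (X Y : H -> Prop) (M : R) :=
  (forall x, X x -> exists y, Y y /\ INR (wdist T x y) < M) /\
  (forall y, Y y -> exists x, X x /\ INR (wdist T x y) < M).

Definition image (G H : group) (f : G -> H) (A : G -> Prop) : H -> Prop :=
  fun h => exists g, A g /\ f g = h.

Definition lipschitz_pair (G H : group) (S : list G) (T : list H)
  (I J : Type) (P : I -> subgroup G) (Q : J -> subgroup H)
  (L C M : R) (f1 : G -> H) (f2 : coset P -> coset Q) : Prop :=
  1 <= L /\ 0 <= C /\ 0 <= M /\
  lipschitz S T L C f1 /\
  forall A : coset P, hausdorff_lt T (image f1 (cmem A)) (cmem (f2 A)) M.

Definition quasi_retraction_pair (G H : group) (S : list G) (T : list H)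
  (I J : Type) (P : I -> subgroup G) (Q : J -> subgroup H)
  (L C M : R) (f1 : G -> H) (f2 : coset P -> coset Q)
  (r1 : H -> G) (r2 : coset Q -> coset P) : Prop :=
  @lipschitz_pair G H S T I J P Q L C M f1 f2 /\
  @lipschitz_pair H G T S J I Q P L C M r1 r2 /\
  (forall g, INR (wdist S (r1 (f1 g)) g) <= C) /\
  (forall A, r2 (f2 A) = A).

Definition quasi_retract (G H : group) (S : list G) (T : list H)
  (I J : Type) (P : I -> subgroup G) (Q : J -> subgroup H) : Prop :=
  exists L C M f1 f2 r1 r2,
    @quasi_retraction_pair G H S T I J P Q L C M f1 f2 r1 r2.

Section Graph.
Variables (V : Type) (adj : V -> V -> Prop).

Fixpoint is_path (p : list V) : Prop :=
  match p with
  | x :: ((y :: _) as q) => adj x y /\ is_path q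
  | _ => True
  end.

Definition edge_loop (c : list V) : Prop :=
  match c with
  | [] => False
  | v :: _ => is_path c /\ adj (last c v) v
  end.

(** elementary homotopies of edge paths in the 2-complex obtained by
    attaching a 2-cell along every loop satisfying [cell] *)
Inductive hstep (cell : list V -> Prop) : list V -> list V -> Prop :=
| hstep_back : forall p q u v,
    is_path (p ++ u :: v :: u :: q) ->
    hstep cell (p ++ u :: v :: u :: q) (p ++ u :: q)
| hstep_cell : forall p q v c,
    cell (v :: c) ->
    is_path (p ++ v :: c ++ v :: q) ->
    hstep cell (p ++ v :: c ++ v :: q) (p ++ v :: q).

Definition simply_connected (cell : list V -> Prop) : Prop :=
  (forall u v, exists p, is_path (u :: p) /\ last (u :: p) u = v) /\
  (forall u p, is_path (u :: p) -> last (u :: p) u = u ->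
     clos_refl_sym_trans _ (hstep cell) (u :: p) [u]).
End Graph.

Definition cvertex (G : group) (I : Type) (P : I -> subgroup G) : Type :=
  (G + coset P)%type.

Definition cadj (G : group) (S : list G) (I : Type) (P : I -> subgroup G)
  (u v : cvertex P) : Prop :=
  match u, v with
  | inl g, inl g' => In (gmul (ginv g) g') S \/ In (gmul (ginv g') g) S
  | inl g, inr A => cmem A g
  | inr A, inl g => cmem A g
  | inr _, inr _ => False
  end.

Definition unicone (G : group) (I : Type) (P : I -> subgroup G)
  (c : list (cvertex P)) : Prop :=
  forall A B, In (inr A) c -> In (inr B) c -> A = B.

(** 2-cells of \hat\Gamma_l: unicone edge loops of length < l *)
Definition ucell (G : group) (S : list G) (I : Type) (P : I -> subgroup G)
  (l : nat) (c : list (cvertex P)) : Prop :=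
  edge_loop (cadj S (P:=P)) c /\ unicone c /\ (length c < l)%nat.

Definition coarsely_unicone_sc (G : group) (S : list G) (I : Type)
  (P : I -> subgroup G) : Prop :=
  exists l : nat, simply_connected (cadj S (P:=P)) (ucell S l).

(* Main.v *)
Require Import Defs.
From Stdlib Require Import Reals List Relations FinFun Lia Lra ClassicalEpsilon Classical ZArith.
Import ListNotations.
Local Open Scope nat_scope.


Section GraphLemmas.
Variables (V : Type) (adj : V -> V -> Prop).
Hypothesis adj_sym : forall x y, adj x y -> adj y x.

Notation path := (is_path adj).

Lemma path_split : forall l1 x l2,
  path (l1 ++ x :: l2) <-> path (l1 ++ [x]) /\ path (x :: l2).
Proof.
  induction l1 as [|a l1 IH]; intros x l2; simpl.
  - tauto.
  - destruct l1 as [|b l1]; simpl in *.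
    + tauto.
    + specialize (IH x l2). simpl in IH. tauto.
Qed.

Lemma path_cons_inv : forall a l, path (a :: l) -> path l.
Proof. intros a [|b l]; simpl; tauto. Qed.

Lemma path_rev : forall l, path l -> path (rev l).
Proof.
  induction l as [|a l IH]; simpl; intros H; auto.
  destruct l as [|b l]; simpl in *; auto.
  destruct H as [Hab H].
  specialize (IH H). simpl in IH.
  rewrite <- app_assoc. simpl.
  apply path_split. split; auto. simpl. auto.
Qed.

Lemma last_cons_d : forall (b : V) l d d', last (b :: l) d = last (b :: l) d'.
Proof. intros b l. revert b. induction l as [|c l IH]; intros b d d'; [reflexivity|].
  change (last (c :: l) d = last (c :: l) d'). apply IH. Qed.

Lemma loop_path_iff : forall A u X B,
  path (A ++ u :: X ++ u :: B) <->
  path (A ++ [u]) /\ path (u :: X ++ [u]) /\ path (u :: B).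
Proof.
  intros. rewrite (path_split A u).
  pose proof (path_split (u :: X) u B) as E. simpl app in E. rewrite E. tauto.
Qed.

Lemma loop_rm_path : forall A u X B,
  path (A ++ u :: X ++ u :: B) -> path (A ++ u :: B).
Proof. intros. apply loop_path_iff in H. apply path_split. tauto. Qed.

Variable cell : list V -> Prop.
Notation htpy := (clos_refl_sym_trans _ (hstep adj cell)).

Lemma hstep_decomp : forall a b, hstep adj cell a b ->
  exists A u X B, a = A ++ u :: X ++ u :: B /\ b = A ++ u :: B /\ path a /\
    ((exists v, X = [v]) \/ cell (u :: X)).
Proof.
  intros a b H; destruct H.
  - exists p, u, [v], q. simpl. repeat split; eauto.
  - exists p, v, c, q. repeat split; eauto.
Qed.

Lemma hstep_path : forall a b, hstep adj cell a b -> path a /\ path b.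
Proof.
  intros a b H. destruct (hstep_decomp _ _ H) as (A&u&X&B&->&->&Hp&_).
  split; auto. eapply loop_rm_path; eauto.
Qed.

Lemma htpy_path : forall a b, htpy a b -> (path a <-> path b).
Proof.
  intros a b H; induction H.
  - apply hstep_path in H. tauto.
  - tauto.
  - tauto.
  - tauto.
Qed.

Lemma hstep_ctx : forall a b P Q, hstep adj cell a b -> path (P ++ a ++ Q) ->
  hstep adj cell (P ++ a ++ Q) (P ++ b ++ Q).
Proof.
  intros a b P Q H Hp. destruct H.
  - replace (P ++ (p ++ u :: v :: u :: q) ++ Q) with ((P ++ p) ++ u :: v :: u :: (q ++ Q)) in *
      by (rewrite <- !app_assoc; reflexivity).
    replace (P ++ (p ++ u :: q) ++ Q) with ((P ++ p) ++ u :: (q ++ Q))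
      by (rewrite <- !app_assoc; reflexivity).
    constructor; auto.
  - replace (P ++ (p ++ v :: c ++ v :: q) ++ Q) with ((P ++ p) ++ v :: c ++ v :: (q ++ Q)) in *
      by (rewrite <- !app_assoc; simpl; rewrite <- !app_assoc; reflexivity).
    replace (P ++ (p ++ v :: q) ++ Q) with ((P ++ p) ++ v :: (q ++ Q))
      by (rewrite <- !app_assoc; reflexivity).
    constructor; auto.
Qed.

Lemma htpy_ctx_gen : forall a b, htpy a b -> forall P Q,
  (path (P ++ a ++ Q) <-> path (P ++ b ++ Q)) /\
  (path (P ++ a ++ Q) -> htpy (P ++ a ++ Q) (P ++ b ++ Q)).
Proof.
  intros a b H; induction H; intros P Q.
  - destruct (hstep_decomp _ _ H) as (A&u&X&B&->&->&Hp&_).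
    split.
    + replace (P ++ (A ++ u :: X ++ u :: B) ++ Q) with ((P ++ A) ++ u :: X ++ u :: (B ++ Q))
        by (rewrite <- !app_assoc; simpl; rewrite <- !app_assoc; reflexivity).
      replace (P ++ (A ++ u :: B) ++ Q) with ((P ++ A) ++ u :: (B ++ Q))
        by (rewrite <- !app_assoc; reflexivity).
      rewrite loop_path_iff. rewrite (path_split (P ++ A) u (B ++ Q)).
      apply loop_path_iff in Hp. tauto.
    + intros Hp'. apply rst_step. apply hstep_ctx; auto.
  - split; [tauto| intros; apply rst_refl].
  - destruct (IHclos_refl_sym_trans P Q) as [H1 H2]. split; [tauto|].
    intros Hp. apply rst_sym. apply H2. tauto.
  - destruct (IHclos_refl_sym_trans1 P Q) as [H1 H2].
    destruct (IHclos_refl_sym_trans2 P Q) as [H3 H4]. split; [tauto|].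
    intros Hp. eapply rst_trans; [apply H2; auto| apply H4; tauto].
Qed.

Lemma htpy_ctx : forall a b P Q, htpy a b -> path (P ++ a ++ Q) ->
  htpy (P ++ a ++ Q) (P ++ b ++ Q).
Proof. intros. apply (htpy_ctx_gen _ _ H); auto. Qed.

Lemma bt_lemma : forall pi a P Q, path (P ++ rev pi ++ a :: pi ++ Q) ->
  htpy (P ++ rev pi ++ a :: pi ++ Q) (P ++ last (a :: pi) a :: Q).
Proof.
  induction pi as [|b pi IH]; intros a P Q Hp; simpl in *.
  - apply rst_refl.
  - replace (P ++ (rev pi ++ [b]) ++ a :: b :: pi ++ Q) with
      ((P ++ rev pi) ++ b :: [a] ++ b :: (pi ++ Q)) in *
      by (rewrite <- !app_assoc; reflexivity).
    eapply rst_trans.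
    + apply rst_step. apply hstep_back. exact Hp.
    + apply loop_rm_path in Hp.
      replace ((P ++ rev pi) ++ b :: pi ++ Q) with (P ++ rev pi ++ b :: pi ++ Q) in *
        by (rewrite <- !app_assoc; reflexivity).
      specialize (IH b P Q Hp).
      replace (match pi with [] => b | _ :: _ => last pi a end) with (last (b :: pi) b).
      exact IH. simpl. destruct pi; auto. apply last_cons_d.
Qed.


Lemma path_snoc : forall m x y,
  path (x :: m ++ [y]) <-> path (x :: m) /\ adj (last (x :: m) x) y.
Proof.
  induction m as [|b m IH]; intros x y.
  - simpl. tauto.
  - change (path (x :: b :: (m ++ [y])) <-> path (x :: b :: m) /\ adj (last (b :: m) x) y).
    change (path (x :: b :: (m ++ [y]))) with (adj x b /\ path (b :: m ++ [y])).
    change (path (x :: b :: m)) with (adj x b /\ path (b :: m)).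
    rewrite IH. rewrite (last_cons_d b m x b). tauto.
Qed.

Lemma path_join : forall l1 x l2, path (l1 ++ [x]) -> path (x :: l2) -> path (l1 ++ x :: l2).
Proof. intros. apply path_split; auto. Qed.

Lemma last_snoc : forall (l : list V) y d, last (l ++ [y]) d = y.
Proof. intros. apply last_last. Qed.

Lemma nil_or_snoc : forall (l : list V), l = [] \/ exists l0 a, l = l0 ++ [a].
Proof. intros l. destruct l as [|a l]; [left; reflexivity|right].
  destruct (@exists_last _ (a :: l)) as (l0 & b & E); [discriminate|]. eauto. Qed.


Lemma last_app_cons : forall (l : list V) b l' d, last (l ++ b :: l') d = last (b :: l') d.
Proof. induction l as [|a l IH]; intros b l' d; [reflexivity|].
  simpl. rewrite IH. destruct l; simpl; [reflexivity|]. destruct l'; reflexivity. Qed.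

Lemma last_glue : forall (l1 l2 : list V) d, last (l1 ++ l2) d = last (last l1 d :: l2) d.
Proof. intros l1 [|b l2] d.
  - rewrite app_nil_r. reflexivity.
  - rewrite last_app_cons. reflexivity. Qed.

Lemma path_glue : forall a l1 l2, path (a :: l1) -> path (last (a :: l1) a :: l2) ->
  path (a :: l1 ++ l2).
Proof. intros a l1 l2 H1 H2. destruct (nil_or_snoc l1) as [->|(l0&b&->)]; [exact H2|].
  change (a :: l0 ++ [b]) with ((a :: l0) ++ [b]) in H2.
  rewrite last_snoc in H2. rewrite <- app_assoc. apply (path_join (a :: l0)); auto. Qed.

Lemma rev_head : forall (u : V) pi, rev (u :: pi) = last (u :: pi) u :: tl (rev (u :: pi)).
Proof. intros u pi. destruct (nil_or_snoc pi) as [->|(l0&b&->)]; [reflexivity|].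
  change (u :: l0 ++ [b]) with ((u :: l0) ++ [b]). rewrite last_snoc, rev_app_distr. reflexivity. Qed.

Lemma last_rev_cons : forall (u : V) pi d, last (rev (u :: pi)) d = u.
Proof. intros. simpl. apply last_snoc. Qed.

Lemma swap_lemma : forall x al be w Zc,
  path (x :: al) -> path (x :: be) -> last (x :: al) x = w -> last (x :: be) x = w ->
  path (x :: al ++ Zc) ->
  (forall c, edge_loop adj c -> incl c (x :: al ++ be) ->
      length c <= S (length al + length be) -> cell c) ->
  htpy (x :: al ++ Zc) (x :: be ++ Zc).
Proof.
  intros x al be w Zc Pa Pb La Lb PZ Hc.
  destruct (nil_or_snoc be) as [Ebe|(be0 & b & Eb)].
  - subst be. simpl in Lb. rewrite <- Lb in La; clear Lb.
    destruct (nil_or_snoc al) as [Eal|(al0 & a & Ea)]; [subst; apply rst_refl|].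
    subst al.
    change (last ((x :: al0) ++ [a]) x = x) in La. rewrite last_snoc in La. subst a.
    apply rst_step.
    replace (x :: (al0 ++ [x]) ++ Zc) with ([] ++ x :: al0 ++ x :: Zc)
      by (simpl; rewrite <- app_assoc; reflexivity).
    simpl. apply (@hstep_cell _ _ _ []).
    + apply Hc.
      * apply path_snoc in Pa. exact Pa.
      * intros z Hz. simpl in Hz |- *. rewrite !in_app_iff. simpl. tauto.
      * simpl. rewrite length_app. simpl. lia.
    + simpl. rewrite <- app_assoc in PZ. exact PZ.
  - subst be.
    change (last ((x :: be0) ++ [b]) x = w) in Lb. rewrite last_snoc in Lb. subst b.
    destruct (nil_or_snoc al) as [Eal|(al0 & a & Ea)].
    + subst al. simpl in La. subst w. simpl in *.
      apply rst_sym. apply rst_step.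
      replace (x :: (be0 ++ [x]) ++ Zc) with ([] ++ x :: be0 ++ x :: Zc)
        by (simpl; rewrite <- app_assoc; reflexivity).
      apply (@hstep_cell _ _ _ []).
      * apply Hc.
        -- apply path_snoc in Pb. exact Pb.
        -- intros z Hz. simpl in Hz |- *. rewrite !in_app_iff. simpl. tauto.
        -- simpl. rewrite length_app. simpl. lia.
      * simpl. apply (path_join (x :: be0)); auto.
    + subst al.
      change (last ((x :: al0) ++ [a]) x = w) in La. rewrite last_snoc in La. subst a.
      assert (PwZ : path (w :: Zc)).
      { rewrite <- app_assoc in PZ. simpl in PZ.
        apply (path_split (x :: al0) w Zc) in PZ. tauto. }
      assert (Prev : path (w :: rev be0 ++ [x])).
      { pose proof (path_rev _ Pb) as R. simpl in R. rewrite rev_app_distr in R. exact R. }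
      set (c := x :: al0 ++ w :: rev be0).
      assert (Pbig : path (x :: al0 ++ w :: rev be0 ++ x :: be0 ++ w :: Zc)).
      { apply (path_join (x :: al0) w); [exact Pa|].
        apply (path_join (w :: rev be0) x); [exact Prev|].
        apply (path_join (x :: be0) w); [exact Pb| exact PwZ]. }
      eapply rst_trans.
      2:{ apply rst_step.
          replace (x :: (be0 ++ [w]) ++ Zc) with ([] ++ x :: (be0 ++ w :: Zc))
            by (simpl; rewrite <- app_assoc; reflexivity).
          apply (@hstep_cell _ _ _ [] (be0 ++ w :: Zc) x (al0 ++ w :: rev be0)).
          - apply Hc.
            + pose proof Pbig as P2.
              replace (x :: al0 ++ w :: rev be0 ++ x :: be0 ++ w :: Zc) with
                ((x :: al0 ++ w :: rev be0) ++ x :: (be0 ++ w :: Zc)) in P2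
                by (simpl; rewrite <- app_assoc; reflexivity).
              apply path_split in P2. destruct P2 as [P2 _].
              exact (proj1 (path_snoc (al0 ++ w :: rev be0) x x) P2).
            + intros z Hz. simpl in Hz |- *. rewrite !in_app_iff in *. simpl in *.
              rewrite <- in_rev in Hz. tauto.
            + simpl. rewrite !length_app. simpl. rewrite length_rev. lia.
          - simpl. rewrite <- app_assoc. simpl. exact Pbig. }
      replace (x :: (al0 ++ [w]) ++ Zc) with ((x :: al0) ++ last (x :: be0 ++ [w]) x :: Zc)
        by (change (x :: be0 ++ [w]) with ((x :: be0) ++ [w]); rewrite last_snoc; simpl; rewrite <- app_assoc; reflexivity).
      apply rst_sym.
      replace ([] ++ x :: (al0 ++ w :: rev be0) ++ x :: be0 ++ w :: Zc) with
        ((x :: al0) ++ rev (be0 ++ [w]) ++ x :: (be0 ++ [w]) ++ Zc)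
        by (rewrite rev_app_distr; simpl; rewrite <- !app_assoc; reflexivity).
      apply bt_lemma.
      rewrite rev_app_distr. simpl. rewrite <- !app_assoc. simpl. exact Pbig.
Qed.

End GraphLemmas.

Section Img.
Variables (W V : Type) (adjW : W -> W -> Prop) (adjV : V -> V -> Prop).
Variables (psi : W -> V) (seg : W -> W -> list V).
Hypothesis seg_last : forall x y, last (psi x :: seg x y) (psi x) = psi y.
Hypothesis seg_path : forall x y, adjW x y -> is_path adjV (psi x :: seg x y).

Fixpoint segs (x : W) (r : list W) : list V :=
  match r with [] => [] | y :: r' => seg x y ++ segs y r' end.
Definition img (l : list W) : list V :=
  match l with [] => [] | x :: r => psi x :: segs x r end.

Lemma segs_last : forall r x, last (psi x :: segs x r) (psi x) = psi (last (x :: r) x).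
Proof.
  induction r as [|y r IH]; intros x; [reflexivity|].
  change (psi x :: segs x (y :: r)) with ((psi x :: seg x y) ++ segs y r).
  rewrite last_glue, seg_last. rewrite (last_cons_d _ _ _ (psi x) (psi y)), IH.
  change (last (x :: y :: r) x) with (last (y :: r) x). rewrite (last_cons_d _ _ _ x y). reflexivity.
Qed.

Lemma segs_cat : forall A a b B, last (a :: A) a = b -> segs a (A ++ B) = segs a A ++ segs b B.
Proof.
  induction A as [|c A IH]; intros a b B H.
  - simpl in H. subst. reflexivity.
  - simpl. rewrite <- app_assoc. f_equal. apply IH.
    change (last (a :: c :: A) a) with (last (c :: A) a) in H.
    rewrite (last_cons_d _ _ _ a c) in H. exact H.
Qed.

Lemma img_path : forall r x, is_path adjW (x :: r) -> is_path adjV (img (x :: r)).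
Proof.
  induction r as [|y r IH]; intros x H; simpl; [exact I|].
  destruct H as [Hxy H].
  change (is_path adjV (psi x :: seg x y ++ segs y r)).
  apply path_glue. apply seg_path; auto.
  rewrite seg_last. apply (IH y H).
Qed.

Lemma img_path' : forall l, is_path adjW l -> is_path adjV (img l).
Proof. intros [|x r] H; [exact I| apply img_path; exact H]. Qed.

Lemma img_app : forall A u B, img (A ++ u :: B) = img (A ++ [u]) ++ segs u B.
Proof.
  intros [|a A] u B; [reflexivity|].
  simpl. f_equal. replace (A ++ u :: B) with ((A ++ [u]) ++ B) by (rewrite <- app_assoc; reflexivity).
  apply segs_cat. change (a :: A ++ [u]) with ((a :: A) ++ [u]). apply last_snoc.
Qed.

Lemma img_last : forall l d d', l <> [] -> last (img l) d = psi (last l d').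
Proof.
  intros [|x r] d d' H; [congruence|].
  simpl img. rewrite (last_cons_d _ _ _ d (psi x)), segs_last. f_equal. apply last_cons_d.
Qed.

Variables (cellW : list W -> Prop) (cellV : list V -> Prop).
Hypothesis cell_tr : forall u X D', is_path adjW (u :: X ++ [u]) ->
  ((exists v, X = [v]) \/ cellW (u :: X)) ->
  segs u (X ++ [u]) = D' ++ [psi u] -> cellV (psi u :: D').

Lemma img_htpy : forall a b, clos_refl_sym_trans _ (hstep adjW cellW) a b ->
  clos_refl_sym_trans _ (hstep adjV cellV) (img a) (img b).
Proof.
  intros a b H; induction H.
  - destruct (hstep_decomp _ _ _ _ _ H) as (A&u&X&B&->&->&Hp&Hc).
    rewrite (img_app A u (X ++ u :: B)), (img_app A u B).
    replace (X ++ u :: B) with ((X ++ [u]) ++ B) by (rewrite <- app_assoc; reflexivity).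
    rewrite (@segs_cat (X ++ [u]) u u B) by (change (u :: X ++ [u]) with ((u :: X) ++ [u]); apply last_snoc).
    assert (HI : last (img (A ++ [u])) (psi u) = psi u).
    { rewrite (@img_last (A ++ [u]) (psi u) u). f_equal. apply last_snoc. destruct A; discriminate. }
    destruct (nil_or_snoc _ (img (A ++ [u]))) as [E|(I0&z&E)].
    { destruct A; discriminate. }
    rewrite E in HI |- *. rewrite last_snoc in HI. subst z.
    assert (HD : last (psi u :: segs u (X ++ [u])) (psi u) = psi u).
    { rewrite segs_last. f_equal. change (u :: X ++ [u]) with ((u :: X) ++ [u]). apply last_snoc. }
    destruct (nil_or_snoc _ (segs u (X ++ [u]))) as [E2|(D'&d&E2)];
      rewrite E2 in HD |- *.
    + apply rst_refl.
    + change (last ((psi u :: D') ++ [d]) (psi u) = psi u) in HD. rewrite last_snoc in HD. subst d.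
      apply rst_step. rewrite <- !app_assoc. simpl.
      apply hstep_cell.
      * apply loop_path_iff in Hp. eapply cell_tr; [ | | exact E2]; tauto.
      * assert (P := Hp). apply path_split in P. destruct P as [_ P].
        pose proof (img_path' _ Hp) as Q.
        rewrite (img_app A u (X ++ u :: B)) in Q.
        replace (X ++ u :: B) with ((X ++ [u]) ++ B) in Q by (rewrite <- app_assoc; reflexivity).
        rewrite (@segs_cat (X ++ [u]) u u B) in Q by (change (u :: X ++ [u]) with ((u :: X) ++ [u]); apply last_snoc).
        rewrite E, E2 in Q. rewrite <- !app_assoc in Q. simpl in Q. exact Q.
  - apply rst_refl.
  - apply rst_sym; auto.
  - eapply rst_trans; eauto.
Qed.
End Img.

Section Ladder.
Variables (V W : Type) (adjV : V -> V -> Prop) (adjW : W -> W -> Prop).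
Variables (cellV : list V -> Prop) (cellW : list W -> Prop).
Hypothesis adjV_sym : forall x y, adjV x y -> adjV y x.
Variables (phi : V -> W) (psi : W -> V) (segP : V -> V -> list W) (segQ : W -> W -> list V)
  (t : V -> list V).
Hypothesis segP_last : forall x y, last (phi x :: segP x y) (phi x) = phi y.
Hypothesis segP_path : forall x y, adjV x y -> is_path adjW (phi x :: segP x y).
Hypothesis segQ_last : forall x y, last (psi x :: segQ x y) (psi x) = psi y.
Hypothesis segQ_path : forall x y, adjW x y -> is_path adjV (psi x :: segQ x y).
Hypothesis t_path : forall x, is_path adjV (x :: t x).
Hypothesis t_last : forall x, last (x :: t x) x = psi (phi x).

Definition Eseg x y := segs W V segQ (phi x) (segP x y).
Definition Zl x r := segs W V segQ (phi x) (segs V W segP x r).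

Hypothesis ladder_cell : forall x y, adjV x y -> forall c, edge_loop adjV c ->
  incl c (x :: (y :: t y) ++ (t x ++ Eseg x y)) ->
  length c <= S (length (y :: t y) + length (t x ++ Eseg x y)) -> cellV c.

Notation htpyV := (clos_refl_sym_trans _ (hstep adjV cellV)).

Lemma ladder : forall r x Q, is_path adjV (x :: r ++ t (last (x :: r) x) ++ Q) ->
  htpyV (x :: r ++ t (last (x :: r) x) ++ Q) (x :: t x ++ Zl x r ++ Q).
Proof.
  induction r as [|y r IH]; intros x Q Hp.
  - simpl. apply rst_refl.
  - assert (El : last (x :: y :: r) x = last (y :: r) y).
    { change (last (x :: y :: r) x) with (last (y :: r) x). apply last_cons_d. }
    rewrite El in *.
    set (tl := t (last (y :: r) y)) in *.
    change (is_path adjV (x :: y :: (r ++ tl ++ Q))) in Hp.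
    destruct Hp as [Hxy Hp'].
    specialize (IH y Q Hp').
    pose proof (htpy_ctx V adjV cellV _ _ [x] [] IH) as H1.
    rewrite !app_nil_r in H1. simpl in H1.
    specialize (H1 (conj Hxy Hp')).
    assert (P2 : is_path adjV (x :: y :: t y ++ Zl y r ++ Q)).
    { apply (htpy_path _ _ _ _ _ H1). exact (conj Hxy Hp'). }
    assert (Hpx : is_path adjV (x :: t x ++ Eseg x y)).
    { apply path_glue; [apply t_path|]. rewrite t_last.
      apply (img_path W V adjW adjV psi segQ segQ_last segQ_path (segP x y) (phi x)).
      apply segP_path; exact Hxy. }
    assert (Lx : last (x :: t x ++ Eseg x y) x = psi (phi y)).
    { change (x :: t x ++ Eseg x y) with ((x :: t x) ++ Eseg x y).
      rewrite last_glue, t_last. unfold Eseg.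
      rewrite (last_cons_d _ _ _ x (psi (phi x))).
      rewrite segs_last by exact segQ_last. f_equal. apply segP_last. }
    assert (Ly : last (x :: y :: t y) x = psi (phi y)).
    { change (last (x :: y :: t y) x) with (last (y :: t y) x).
      rewrite (last_cons_d _ _ _ x y). apply t_last. }
    pose proof (swap_lemma V adjV adjV_sym cellV x (y :: t y) (t x ++ Eseg x y)
      (psi (phi y)) (Zl y r ++ Q) (conj Hxy (t_path y)) Hpx Ly Lx P2
      (ladder_cell x y Hxy)) as H2.
    assert (EZ : Zl x (y :: r) = Eseg x y ++ Zl y r).
    { unfold Zl, Eseg. simpl segs at 2. apply segs_cat. apply segP_last. }
    rewrite EZ.
    eapply rst_trans; [exact H1|].
    rewrite <- !app_assoc. rewrite <- !app_assoc in H2. exact H2.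
Qed.

Hypothesis W_sc : simply_connected adjW cellW.
Hypothesis V_conn : forall u v, exists p, is_path adjV (u :: p) /\ last (u :: p) u = v.
Hypothesis cell_tr : forall u X D', is_path adjW (u :: X ++ [u]) ->
  ((exists v, X = [v]) \/ cellW (u :: X)) ->
  segs W V segQ u (X ++ [u]) = D' ++ [psi u] -> cellV (psi u :: D').

Theorem generic_sc : simply_connected adjV cellV.
Proof.
  split; [exact V_conn|].
  intros u p Hp Hl.
  set (pi := t u). set (w := psi (phi u)).
  set (sg := tl (rev (u :: pi))).
  assert (Erev : rev (u :: pi) = w :: sg).
  { unfold sg. rewrite rev_head at 1. unfold pi, w. rewrite t_last. reflexivity. }
  assert (Epi : u :: pi = rev sg ++ [w]).
  { rewrite <- (rev_involutive (u :: pi)), Erev. reflexivity. }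
  assert (Psg : is_path adjV (w :: sg)).
  { rewrite <- Erev. apply path_rev; [exact adjV_sym| apply t_path]. }
  assert (Lsg : last (w :: sg) w = u).
  { rewrite <- Erev. apply last_rev_cons. }
  destruct (nil_or_snoc _ (u :: p)) as [E|(G0&z&EG)]; [discriminate|].
  assert (z = u) by (rewrite <- Hl, EG; symmetry; apply last_snoc). subst z.
  assert (Pbig : is_path adjV (G0 ++ u :: pi ++ sg)).
  { apply path_join. rewrite <- EG; exact Hp.
    apply path_glue; [apply t_path|]. fold pi. rewrite t_last. exact Psg. }
  assert (HA : clos_refl_sym_trans _ (hstep adjV cellV) (u :: p) (G0 ++ u :: pi ++ sg)).
  { apply rst_sym.
    replace (G0 ++ u :: pi ++ sg) with (G0 ++ rev sg ++ w :: sg ++ [])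
      by (rewrite app_nil_r; change (u :: pi ++ sg) with ((u :: pi) ++ sg);
          rewrite Epi, <- app_assoc; reflexivity).
    rewrite EG. replace (G0 ++ [u]) with (G0 ++ [last (w :: sg) w]) by (rewrite Lsg; reflexivity).
    apply bt_lemma. rewrite app_nil_r.
    replace (G0 ++ rev sg ++ w :: sg) with (G0 ++ u :: pi ++ sg)
      by (change (u :: pi ++ sg) with ((u :: pi) ++ sg);
          rewrite Epi, <- app_assoc; reflexivity). exact Pbig. }
  assert (HB : clos_refl_sym_trans _ (hstep adjV cellV) (G0 ++ u :: pi ++ sg)
                 (u :: pi ++ Zl u p ++ sg)).
  { replace (G0 ++ u :: pi ++ sg) with (u :: p ++ t (last (u :: p) u) ++ sg).
    - apply ladder. rewrite Hl. fold pi.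
      replace (u :: p ++ pi ++ sg) with (G0 ++ u :: pi ++ sg); [exact Pbig|].
      change (u :: p ++ pi ++ sg) with ((u :: p) ++ pi ++ sg). rewrite EG, <- app_assoc. reflexivity.
    - rewrite Hl. fold pi.
      change (u :: p ++ pi ++ sg) with ((u :: p) ++ pi ++ sg). rewrite EG, <- app_assoc. reflexivity. }
  assert (HC : clos_refl_sym_trans _ (hstep adjV cellV) (w :: Zl u p) [w]).
  { assert (PW : is_path adjW (phi u :: segs V W segP u p)).
    { apply (img_path V W adjV adjW phi segP segP_last segP_path p u Hp). }
    assert (LW : last (phi u :: segs V W segP u p) (phi u) = phi u).
    { rewrite segs_last by exact segP_last. rewrite Hl. reflexivity. }
    pose proof (proj2 W_sc (phi u) (segs V W segP u p) PW LW) as HW.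
    exact (img_htpy W V adjW adjV psi segQ segQ_last segQ_path cellW cellV cell_tr _ _ HW). }
  assert (HD : clos_refl_sym_trans _ (hstep adjV cellV) (u :: pi ++ Zl u p ++ sg)
                 (rev sg ++ [w] ++ sg)).
  { replace (u :: pi ++ Zl u p ++ sg) with (rev sg ++ (w :: Zl u p) ++ sg)
      by (change (u :: pi ++ Zl u p ++ sg) with ((u :: pi) ++ Zl u p ++ sg);
          rewrite Epi, <- app_assoc; reflexivity).
    apply htpy_ctx; [exact HC|].
    replace (rev sg ++ (w :: Zl u p) ++ sg) with (u :: pi ++ Zl u p ++ sg)
      by (change (u :: pi ++ Zl u p ++ sg) with ((u :: pi) ++ Zl u p ++ sg);
          rewrite Epi, <- app_assoc; reflexivity).
    apply (htpy_path _ _ _ _ _ HB). exact Pbig. }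
  assert (HE : clos_refl_sym_trans _ (hstep adjV cellV) (rev sg ++ [w] ++ sg) [u]).
  { replace (rev sg ++ [w] ++ sg) with ([] ++ rev sg ++ w :: sg ++ [])
      by (rewrite app_nil_r; reflexivity).
    replace [u] with ([] ++ [last (w :: sg) w]) by (rewrite Lsg; reflexivity).
    apply bt_lemma. simpl. rewrite app_nil_r.
    replace (rev sg ++ w :: sg) with ((rev sg ++ [w]) ++ sg) by (rewrite <- app_assoc; reflexivity). rewrite <- Epi. apply path_glue; [apply t_path|]. fold pi. rewrite t_last. exact Psg. }
  eapply rst_trans; [exact HA|].
  eapply rst_trans; [exact HB|].
  eapply rst_trans; [exact HD|]. exact HE.
Qed.
End Ladder.
Local Open Scope R_scope.

Lemma nat_above : forall r : R, exists n : nat, r < INR n.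
Proof.
  intros r. destruct (archimed r) as [H _].
  destruct (Z_lt_le_dec (up r) 0) as [Hl|Hl].
  - exists 0%nat. simpl. apply IZR_lt in Hl. lra.
  - exists (Z.to_nat (up r)). rewrite INR_IZR_INZ, Z2Nat.id by lia. lra.
Qed.

Section Grp.
Variable G : group.

Lemma mul_inv_r : forall x : G, gmul x (ginv x) = gone.
Proof.
  intros x.
  transitivity (gmul (gmul (ginv (ginv x)) (ginv x)) (gmul x (ginv x))).
  { rewrite ginv_l, gone_l; reflexivity. }
  rewrite <- gassoc. rewrite (gassoc (ginv x) x (ginv x)). rewrite ginv_l, gone_l. apply ginv_l.
Qed.

Lemma mul_one_r : forall x : G, gmul x gone = x.
Proof. intros x. rewrite <- (ginv_l x), gassoc, mul_inv_r. apply gone_l. Qed.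

Lemma mul_cancel_l : forall a b c : G, gmul a b = gmul a c -> b = c.
Proof. intros a b c H. rewrite <- (gone_l b), <- (gone_l c), <- (ginv_l a), <- !gassoc, H. reflexivity. Qed.

Lemma inv_mul : forall x y : G, ginv (gmul x y) = gmul (ginv y) (ginv x).
Proof.
  intros x y. apply (mul_cancel_l (gmul x y)). rewrite mul_inv_r.
  rewrite <- gassoc, (gassoc y (ginv y)), mul_inv_r, gone_l, mul_inv_r. reflexivity.
Qed.

Lemma inv_inv : forall x : G, ginv (ginv x) = x.
Proof. intros x. apply (mul_cancel_l (ginv x)). rewrite mul_inv_r, ginv_l. reflexivity. Qed.

Lemma inv_mul_cancel : forall x s : G, gmul (ginv x) (gmul x s) = s.
Proof. intros. rewrite gassoc, ginv_l. apply gone_l. Qed.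

End Grp.

Definition isel {G : group} {I : Type} {P : I -> subgroup G} (z : cvertex P) : Prop :=
  exists g, z = inl g.

Section Pair.
Variables (G : group) (S : list G) (I : Type) (P : I -> subgroup G).
Notation V := (cvertex P).
Notation adj := (cadj S (P:=P)).

Lemma cadj_sym : forall x y : V, adj x y -> adj y x.
Proof. intros [g|A] [h|B]; simpl; tauto. Qed.

Lemma word_path : forall w x, Forall (letter S) w ->
  exists p, is_path adj (inl x :: p) /\ last (inl x :: p) (inl x) = inl (gmul x (wprod w)) /\
    length p = length w /\ forall z, In z p -> isel z.
Proof.
  induction w as [|s w IH]; intros x Hw.
  - exists []. simpl. repeat split; auto. rewrite mul_one_r. reflexivity. intros z [].
  - inversion Hw as [|? ? Hs Hw']; subst.
    destruct (IH (gmul x s) Hw') as (p & Pp & Lp & Len & El).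
    exists (inl (gmul x s) :: p). repeat split.
    + simpl. destruct Hs as [Hs|Hs].
      * left. rewrite inv_mul_cancel. exact Hs.
      * right. rewrite inv_mul, <- gassoc, ginv_l, mul_one_r. exact Hs.
    + exact Pp.
    + change (last (inl (gmul x s) :: p) (inl x) = inl (gmul x (wprod (s :: w)))).
      rewrite (last_cons_d _ _ _ _ (inl (gmul x s))), Lp. simpl. rewrite gassoc. reflexivity.
    + simpl. rewrite Len. reflexivity.
    + intros z [<-|Hz]; [exists (gmul x s); reflexivity| auto].
Qed.

Lemma wordlen_path : forall n x y, wordlen S n x y ->
  exists p, is_path adj (inl x :: p) /\ last (inl x :: p) (inl x) = inl y /\
    length p = n /\ forall z, In z p -> isel z.
Proof.
  intros n x y (w & Len & Hw & Hp).
  destruct (word_path w x Hw) as (p & P1 & P2 & P3 & P4).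
  exists p. repeat split; auto.
  - rewrite P2, Hp, gassoc, mul_inv_r, gone_l. reflexivity.
  - congruence.
Qed.

Lemma min_exists : forall (Q : nat -> Prop) n, Q n -> exists m, Q m /\ forall k, Q k -> (m <= k)%nat.
Proof.
  intros Q n. induction n as [n IH] using (well_founded_induction Wf_nat.lt_wf). intros Hn.
  destruct (classic (exists k, (k < n)%nat /\ Q k)) as [(k & Hk & Qk)|Hno].
  - exact (IH k Hk Qk).
  - exists n. split; auto. intros k Qk. destruct (Nat.lt_ge_cases k n) as [Hlt|]; auto.
    exfalso. apply Hno. eauto.
Qed.

Lemma wdist_spec : forall x y, (exists n, wordlen S n x y) ->
  wordlen S (wdist S x y) x y /\ forall m, wordlen S m x y -> (wdist S x y <= m)%nat.
Proof.
  intros x y [n Hn]. unfold wdist.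
  apply (epsilon_spec (inhabits 0%nat)
    (fun n => wordlen S n x y /\ forall m, wordlen S m x y -> (n <= m)%nat)).
  apply (min_exists (fun n => wordlen S n x y) n Hn).
Qed.

Lemma gen_wordlen : generates S -> forall x y, exists n, wordlen S n x y.
Proof.
  intros Hg x y. destruct (Hg (gmul (ginv x) y)) as (w & Hw & Hp).
  exists (length w), w. auto.
Qed.

Lemma dist_path : generates S -> forall x y, exists p, is_path adj (inl x :: p) /\
  last (inl x :: p) (inl x) = inl y /\ length p = wdist S x y /\ forall z, In z p -> isel z.
Proof.
  intros Hg x y. apply wordlen_path. apply wdist_spec. apply gen_wordlen; auto.
Qed.

Lemma adj_wdist : forall g g', adj (inl g) (inl g') -> (wdist S g g' <= 1)%nat.
Proof.
  intros g g' H.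
  assert (W1 : wordlen S 1 g g').
  { exists [gmul (ginv g) g']. simpl. split; [reflexivity|]. split.
    - constructor; [|constructor]. destruct H as [H|H]; [left; exact H|right].
      rewrite inv_mul, inv_inv. exact H.
    - apply mul_one_r. }
  apply wdist_spec; eauto.
Qed.

Definition conn (u v : V) := exists p, is_path adj (u :: p) /\ last (u :: p) u = v.

Lemma conn_sym : forall u v, conn u v -> conn v u.
Proof.
  intros u v (p & Pp & Lp). exists (tl (rev (u :: p))).
  pose proof (rev_head _ u p) as E. rewrite Lp in E. rewrite <- E. split.
  - apply path_rev; [exact cadj_sym| exact Pp].
  - apply last_rev_cons.
Qed.

Lemma conn_trans : forall u v w, conn u v -> conn v w -> conn u w.
Proof.
  intros u v w (p & Pp & Lp) (q & Pq & Lq). exists (p ++ q). split.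
  - apply path_glue; auto. rewrite Lp. exact Pq.
  - change (u :: p ++ q) with ((u :: p) ++ q). rewrite last_glue, Lp.
    rewrite (last_cons_d _ _ _ _ v). exact Lq.
Qed.

Lemma conn_all : generates S -> forall u v, conn u v.
Proof.
  intros Hg.
  assert (H1 : forall u, conn u (inl gone)).
  { intros [g|A].
    - destruct (dist_path Hg g gone) as (p & P1 & P2 & _). exists p; auto.
    - destruct A as [[i c] Hc]. destruct Hc as [g Hg'].
      assert (Hm : c g).
      { apply Hg'. rewrite ginv_l. apply sg_one. }
      apply (conn_trans _ (inl g)).
      + exists [inl g]. split; [|reflexivity]. simpl. split; auto.
      + destruct (dist_path Hg g gone) as (p & P1 & P2 & _). exists p; auto. }
  intros u v. apply (conn_trans _ (inl gone)); auto. apply conn_sym; auto.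
Qed.

End Pair.

Definition vmap {G H : group} {I J : Type} {P : I -> subgroup G} {Q : J -> subgroup H}
  (f1 : G -> H) (f2 : coset P -> coset Q) (v : cvertex P) : cvertex Q :=
  match v with inl g => inl (f1 g) | inr A => inr (f2 A) end.

Lemma choice2 : forall (A B : Type) (R : A -> A -> B -> Prop),
  (forall x y, exists b, R x y b) -> exists f : A -> A -> B, forall x y, R x y (f x y).
Proof.
  intros A B R H.
  exists (fun x y => proj1_sig (constructive_indefinite_description _ (H x y))).
  intros x y. exact (proj2_sig (constructive_indefinite_description _ (H x y))).
Qed.

Lemma choice1 : forall (A B : Type) (R : A -> B -> Prop),
  (forall x, exists b, R x b) -> exists f : A -> B, forall x, R x (f x).
Proof.
  intros A B R H.
  exists (fun x => proj1_sig (constructive_indefinite_description _ (H x))).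
  intros x. exact (proj2_sig (constructive_indefinite_description _ (H x))).
Qed.

Lemma in_rev_cons_isel : forall {G I} {P : I -> subgroup G} (x : G) (p : list (cvertex P)) z,
  (forall z, In z p -> isel z) -> In z (rev (inl x :: p)) -> isel z.
Proof.
  intros G I P x p z Hp Hz. apply in_rev in Hz. destruct Hz as [<-|Hz]; [exists x; reflexivity|auto].
Qed.

Section Maps.
Variables (G H : group) (S : list G) (T : list H) (I J : Type)
  (P : I -> subgroup G) (Q : J -> subgroup H) (L C M : R)
  (f1 : G -> H) (f2 : coset P -> coset Q).
Hypothesis genT : generates T.
Hypothesis Hlp : @lipschitz_pair G H S T I J P Q L C M f1 f2.

Lemma seg_exists : exists K : nat, exists seg : cvertex P -> cvertex P -> list (cvertex Q),
  forall x y, last (vmap f1 f2 x :: seg x y) (vmap f1 f2 x) = vmap f1 f2 y /\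
    (forall z, In z (seg x y) -> z = vmap f1 f2 y \/ isel z) /\
    (cadj S x y -> is_path (cadj T (P:=Q)) (vmap f1 f2 x :: seg x y) /\ (length (seg x y) <= K)%nat).
Proof.
  destruct Hlp as (HL & HC & HM & Hlip & Hhaus).
  destruct (nat_above (L + C + M)) as [K HK]. exists K.
  apply (choice2 (cvertex P) (list (cvertex Q)) (fun x y s =>
    last (vmap f1 f2 x :: s) (vmap f1 f2 x) = vmap f1 f2 y /\
    (forall z, In z s -> z = vmap f1 f2 y \/ isel z) /\
    (cadj S x y -> is_path (cadj T (P:=Q)) (vmap f1 f2 x :: s) /\ (length s <= K)%nat))).
  intros [g|A] [g'|A'].
  - destruct (dist_path H T J Q genT (f1 g) (f1 g')) as (p & P1 & P2 & P3 & P4).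
    exists p. split; [exact P2|]. split; [intros z Hz; right; auto|].
    intros Hadj. split; [exact P1|].
    apply (adj_wdist G S I P) in Hadj. apply le_INR in Hadj.
    specialize (Hlip g g'). simpl in Hadj.
    assert (Hd : INR (wdist T (f1 g) (f1 g')) < INR K) by nra.
    apply INR_lt in Hd. unfold cvertex in *. lia.
  - destruct (classic (cmem A' g)) as [Hm|Hm].
    + destruct (proj1 (Hhaus A') (f1 g)) as (h & Hh & Hd); [exists g; auto|].
      destruct (dist_path H T J Q genT (f1 g) h) as (p & P1 & P2 & P3 & P4).
      exists (p ++ [inr (f2 A')]). split.
      { change (last ((inl (f1 g) :: p) ++ [inr (f2 A')]) (inl (f1 g)) = inr (f2 A')).
        apply last_snoc. }
      split.
      { intros z Hz. apply in_app_iff in Hz. destruct Hz as [Hz|[<-|[]]]; auto. }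
      intros _. split.
      * apply (path_glue _ _ (inl (f1 g))); [exact P1|]. rewrite P2. simpl. auto.
      * rewrite length_app. simpl.
        assert (Hd' : INR (wdist T (f1 g) h) < INR K) by lra. apply INR_lt in Hd'. unfold cvertex in *. lia.
    + exists [inr (f2 A')]. simpl. split; [reflexivity|]. split; [intros z [<-|[]]; auto|].
      intros Hadj. contradiction.
  - destruct (classic (cmem A g')) as [Hm|Hm].
    + destruct (proj1 (Hhaus A) (f1 g')) as (h & Hh & Hd); [exists g'; auto|].
      destruct (dist_path H T J Q genT (f1 g') h) as (p & P1 & P2 & P3 & P4).
      pose proof (rev_head _ (inl (f1 g')) p) as E. rewrite P2 in E.
      exists (rev (inl (f1 g') :: p)). split.
      { rewrite E. change (last (inl h :: tl (rev (inl (f1 g') :: p))) (vmap f1 f2 (inr A)) = inl (f1 g')).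
        rewrite (last_cons_d _ _ _ _ (inl h)), <- E. apply last_rev_cons. }
      split.
      { intros z Hz. right. exact (in_rev_cons_isel _ _ _ P4 Hz). }
      intros _. split.
      * rewrite E. simpl vmap. change (cmem (f2 A) h /\ is_path (cadj T (P:=Q)) (inl h :: tl (rev (inl (f1 g') :: p)))).
        split; auto. rewrite <- E. apply path_rev; [apply cadj_sym| exact P1].
      * rewrite length_rev. simpl.
        assert (Hd' : INR (wdist T (f1 g') h) < INR K) by lra. apply INR_lt in Hd'. unfold cvertex in *. lia.
    + exists [inl (f1 g')]. simpl. split; [reflexivity|]. split; [intros z [<-|[]]; auto|].
      intros Hadj. contradiction.
  - exists [inr (f2 A')]. simpl. split; [reflexivity|]. split; [intros z [<-|[]]; auto|].
    intros [].
Qed.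
End Maps.

Section Tether.
Variables (G H : group) (S : list G) (I J : Type)
  (P : I -> subgroup G) (Q : J -> subgroup H) (C : R)
  (f1 : G -> H) (f2 : coset P -> coset Q) (r1 : H -> G) (r2 : coset Q -> coset P).
Hypothesis genS : generates S.
Hypothesis Hrf : forall g, INR (wdist S (r1 (f1 g)) g) <= C.
Hypothesis Hrf2 : forall A, r2 (f2 A) = A.

Lemma tether_exists : exists K : nat, exists t : cvertex P -> list (cvertex P),
  forall x, is_path (cadj S (P:=P)) (x :: t x) /\
    last (x :: t x) x = vmap r1 r2 (vmap f1 f2 x) /\ (length (t x) <= K)%nat /\
    forall z, In z (t x) -> isel z.
Proof.
  destruct (nat_above C) as [K HK]. exists K.
  apply (choice1 (cvertex P) (list (cvertex P)) (fun x tx => is_path (cadj S (P:=P)) (x :: tx) /\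
    last (x :: tx) x = vmap r1 r2 (vmap f1 f2 x) /\ (length tx <= K)%nat /\
    forall z, In z tx -> isel z)).
  intros [g|A].
  - destruct (dist_path G S I P genS (r1 (f1 g)) g) as (p & P1 & P2 & P3 & P4).
    pose proof (rev_head _ (inl (r1 (f1 g))) p) as E. rewrite P2 in E.
    exists (tl (rev (inl (r1 (f1 g)) :: p))). cbv beta. unfold cvertex in *. rewrite <- E. split; [|split; [|split]].
    + apply path_rev; [apply cadj_sym| exact P1].
    + apply last_rev_cons.
    + pose proof (f_equal (@length _) E) as Hl. rewrite length_rev in Hl. cbn [length] in Hl.
      rewrite P3 in Hl.
      specialize (Hrf g). assert (Hd : INR (wdist S (r1 (f1 g)) g) < INR K) by lra.
      apply INR_lt in Hd. lia.
    + intros z Hz. apply (in_rev_cons_isel (r1 (f1 g)) p z P4). rewrite E. right. exact Hz.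
  - exists []. simpl. rewrite Hrf2. repeat split; auto; try (intros ? []); lia.
Qed.
End Tether.
Local Close Scope R_scope.

Lemma segs_len : forall (W V : Type) (adjW : W -> W -> Prop) (seg : W -> W -> list V) K,
  (forall a b, adjW a b -> (length (seg a b) <= K)%nat) ->
  forall r x, is_path adjW (x :: r) -> (length (segs W V seg x r) <= K * length r)%nat.
Proof.
  intros W V adjW seg K HK. induction r as [|y r IH]; intros x Hp; simpl; [lia|].
  destruct Hp as [Hxy Hp]. rewrite length_app.
  specialize (HK x y Hxy). specialize (IH y Hp). nia.
Qed.

Lemma segs_in : forall (W V : Type) (psi : W -> V) (seg : W -> W -> list V) (E : V -> Prop),
  (forall a b z, In z (seg a b) -> z = psi b \/ E z) ->
  forall r x z, In z (segs W V seg x r) -> (exists y, In y r /\ z = psi y) \/ E z.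
Proof.
  intros W V psi seg E HE. induction r as [|y r IH]; intros x z Hz; simpl in Hz; [contradiction|].
  apply in_app_iff in Hz. destruct Hz as [Hz|Hz].
  - destruct (HE _ _ _ Hz) as [->|]; auto. left. exists y. simpl. auto.
  - destruct (IH _ _ Hz) as [(y' & Hy' & ->)|]; auto. left. exists y'. simpl. auto.
Qed.

Lemma vmap_inr : forall {G H : group} {I J : Type} {P : I -> subgroup G} {Q : J -> subgroup H}
  (f1 : G -> H) (f2 : coset P -> coset Q) z A,
  vmap f1 f2 z = inr A -> exists B, z = inr B /\ A = f2 B.
Proof. intros G H I J P Q f1 f2 [g|B] A E; simpl in E; [discriminate|]. injection E as <-. eauto. Qed.

Lemma isel_inr : forall {G : group} {I : Type} {P : I -> subgroup G} (A : coset P),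
  isel (inr A : cvertex P) -> False.
Proof. intros G I P A [g E]. discriminate. Qed.

Theorem lemma4p9 (G H : group) (I J : Type)
  (P : I -> subgroup G) (Q : J -> subgroup H) (S : list G) (T : list H) :
  Finite I -> inhabited I -> Finite J -> inhabited J ->
  generates S -> generates T ->
  quasi_retract S T P Q ->
  coarsely_unicone_sc T Q ->
  coarsely_unicone_sc S P.
Proof.
  intros _ _ _ _ genS genT (L & C & M & f1 & f2 & r1 & r2 & Hf & Hr & Hrf & Hrf2) (lH & HscH).
  destruct (seg_exists G H S T I J P Q L C M f1 f2 genT Hf) as (K1 & segP & HsegP).
  destruct (seg_exists H G T S J I Q P L C M r1 r2 genS Hr) as (K2 & segQ & HsegQ).
  destruct (tether_exists G H S I J P Q C f1 f2 r1 r2 genS Hrf Hrf2) as (K3 & t & Ht).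
  exists (K2 * (lH + 2) + 2 * K3 + K2 * K1 + 4)%nat.
  apply (generic_sc (cvertex P) (cvertex Q) (cadj S (P:=P)) (cadj T (P:=Q))
    (ucell S (P:=P) (K2 * (lH + 2) + 2 * K3 + K2 * K1 + 4)) (ucell T (P:=Q) lH)
    (cadj_sym G S I P) (vmap f1 f2) (vmap r1 r2) segP segQ t).
  - intros x y. apply HsegP.
  - intros x y Hxy. apply HsegP; exact Hxy.
  - intros x y. apply HsegQ.
  - intros x y Hxy. apply HsegQ; exact Hxy.
  - intros x. apply Ht.
  - intros x. apply Ht.
  -
    intros x y Hxy c Hc Hinc Hlen.
    assert (Hcone : forall A, In (inr A) c -> x = inr A \/ y = inr A).
    { intros A HA. apply Hinc in HA.
      destruct HA as [HA|HA]; [auto|]. simpl in HA. destruct HA as [HA|HA]; [auto|].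
      apply in_app_iff in HA. destruct HA as [HA|HA].
      { exfalso. apply (isel_inr A). apply (proj2 (proj2 (proj2 (Ht y)))); exact HA. }
      apply in_app_iff in HA. destruct HA as [HA|HA].
      { exfalso. apply (isel_inr A). apply (proj2 (proj2 (proj2 (Ht x)))); exact HA. }
      unfold Eseg in HA.
      destruct (segs_in _ _ (vmap r1 r2) segQ isel (fun a b z Hz => proj1 (proj2 (HsegQ a b)) z Hz)
                  _ _ _ HA) as [(y' & Hy' & Ey')|HE].
      - destruct (proj1 (proj2 (HsegP x y)) y' Hy') as [->|Hy''].
        + symmetry in Ey'. destruct (vmap_inr _ _ _ _ Ey') as (B & EB & ->).
          destruct (vmap_inr _ _ _ _ EB) as (B' & EB' & ->). subst y. rewrite Hrf2. auto.
        + exfalso. destruct Hy'' as [h ->]. simpl in Ey'. discriminate.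
      - exfalso. exact (isel_inr A HE). }
    split; [exact Hc|]. split.
    + intros A B HA HB.
      destruct (Hcone A HA) as [EA|EA]; destruct (Hcone B HB) as [EB|EB];
        rewrite EA in *; try congruence; rewrite EB in *; simpl in Hxy; contradiction.
    + assert (HE : (length (Eseg (cvertex P) (cvertex Q) (vmap f1 f2) segP segQ x y) <= K2 * K1)%nat).
      { unfold Eseg.
        eapply Nat.le_trans.
        - apply (segs_len _ _ (cadj T (P:=Q)) segQ K2).
          + intros a b Hab. apply HsegQ; exact Hab.
          + apply HsegP; exact Hxy.
        - apply Nat.mul_le_mono_l. apply HsegP; exact Hxy. }
      pose proof (proj1 (proj2 (proj2 (Ht x)))) as Htx.
      pose proof (proj1 (proj2 (proj2 (Ht y)))) as Hty.
      simpl in Hlen. rewrite length_app in Hlen. lia.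
  - exact HscH.
  - apply conn_all; exact genS.
  -
    intros u X D' Hp Hcase Eseg'.
    assert (Himg : is_path (cadj S (P:=P)) (vmap r1 r2 u :: D' ++ [vmap r1 r2 u])).
    { rewrite <- Eseg'.
      exact (img_path _ _ _ _ (vmap r1 r2) segQ (fun a b => proj1 (HsegQ a b))
               (fun a b Hab => proj1 (proj2 (proj2 (HsegQ a b)) Hab)) (X ++ [u]) u Hp). }
    assert (Hcone : forall A, In (inr A) (vmap r1 r2 u :: D') ->
              exists B, In (inr B) (u :: X) /\ A = r2 B).
    { intros A [HA|HA].
      - destruct (vmap_inr _ _ _ _ HA) as (B & -> & ->). exists B. simpl. auto.
      - assert (HA' : In (inr A) (segs _ _ segQ u (X ++ [u]))).
        { rewrite Eseg'. apply in_app_iff. auto. }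
        destruct (segs_in _ _ (vmap r1 r2) segQ isel (fun a b z Hz => proj1 (proj2 (HsegQ a b)) z Hz)
                    _ _ _ HA') as [(y' & Hy' & Ey')|HE].
        + symmetry in Ey'. destruct (vmap_inr _ _ _ _ Ey') as (B & -> & ->). exists B. split; auto.
          apply in_app_iff in Hy'. simpl in Hy' |- *. tauto.
        + exfalso. exact (isel_inr A HE). }
    split; [|split].
    + unfold edge_loop. apply (proj1 (path_snoc _ _ (fun _ => True) D' _ _)). exact Himg.
    + intros A1 A2 H1 H2.
      destruct (Hcone A1 H1) as (B1 & HB1 & ->). destruct (Hcone A2 H2) as (B2 & HB2 & ->).
      f_equal.
      destruct Hcase as [(v & ->)|Hcell].
      * simpl in Hp. destruct Hp as [Huv [Hvu _]].
        simpl in HB1, HB2.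
        destruct HB1 as [E1|[E1|[]]]; destruct HB2 as [E2|[E2|[]]]; subst; try congruence;
          simpl in Huv; try contradiction; rewrite E2 in Huv; simpl in Huv; contradiction.
      * destruct Hcell as (_ & Huni & _). apply Huni; auto.
    + assert (Hl : (length (segs _ _ segQ u (X ++ [u])) <= K2 * length (X ++ [u]))%nat).
      { apply (segs_len _ _ (cadj T (P:=Q)) segQ K2); [|exact Hp].
        intros a b Hab. apply HsegQ; exact Hab. }
      rewrite Eseg', !length_app in Hl. simpl in Hl |- *.
      assert (HX : (length X + 1 <= lH + 2)%nat).
      { destruct Hcase as [(v & ->)|(_ & _ & Hc)]; simpl in *; lia. }
      assert (K2 * (length X + 1) <= K2 * (lH + 2))%nat by (apply Nat.mul_le_mono_l; exact HX).
      lia.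
Qed.
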